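(* Let $\mathrm{k}$ be an infinite field and $\mathcal{A}$ a unital associative $\mathrm{k}$-algebra satisfying $\mathbf{H}_{\mathrm{s}}$. Let $V,W$ be finite-dimensional $\mathrm{k}$-subspaces of $\mathcal{A}$ such that the elements of $V$ pairwise commute, $V\cap U(\mathcal{A})\neq\emptyset$ and $W\cap U(\mathcal{A})\neq\emptyset$. Then there exist a $\mathrm{k}$-subspace $S$ of $\mathrm{k}\langle VW\rangle$ and a finite-dimensional subalgebra $\mathcal{H}$ of $\mathcal{A}$ such that $S\cap U(\mathcal{A})\neq\emptyset$, $\mathrm{k}\subseteq\mathcal{H}\subseteq\mathcal{A}$, $\dim_{\mathrm{k}}\mathrm{k}\langle VW\rangle\geq\dim_{\mathrm{k}}S\geq\dim_{\mathrm{k}}V+\dim_{\mathrm{k}}W-\dim_{\mathrm{k}}\mathcal{H}$, and $\mathcal{H}S=S$.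
   Context: Algebras are unital associative, subalgebras contain $1$; $U(\mathcal{A})$ is the group of invertible elements; $\mathrm{k}\langle S\rangle$ is linear span; $VW=\{vw\mid v\in V,w\in W\}$. Hypothesis $\mathbf{H}_{\mathrm{s}}$: $\mathcal{A}$ is finite-dimensional over $\mathrm{k}$, or $\mathrm{k}\in\{\mathbb{R},\mathbb{C}\}$ and $\mathcal{A}$ is a Banach algebra over $\mathrm{k}$, or $\mathcal{A}$ is a finite product of field extensions of $\mathrm{k}$. No hypothesis on the number of subalgebras is made. *)

(* Defs.v *)
From HB Require Import structures.
From mathcomp Require Import all_boot all_order all_algebra.
From mathcomp Require Import reals.
From mathcomp Require Import complex.
Set Implicit Arguments. Unset Strict Implicit. Unset Printing Implicit Defensive.
Import Order.TTheory GRing.Theory Num.Theory.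
Local Open Scope ring_scope.

Section LinAlg.
Variables (k : fieldType) (A : lmodType k).

Definition kspan (s : seq A) (x : A) : Prop :=
  exists c : 'I_(size s) -> k, x = \sum_(i < size s) c i *: s`_i.

Definition lin_indep (s : seq A) : Prop :=
  forall c : 'I_(size s) -> k,
    \sum_(i < size s) c i *: s`_i = 0 -> forall i, c i = 0.

Definition is_basis (P : A -> Prop) (b : seq A) : Prop :=
  lin_indep b /\ forall x, P x <-> kspan b x.

Definition has_dim (P : A -> Prop) (d : nat) : Prop :=
  exists b, is_basis P b /\ size b = d.

Definition fin_dim : Prop := exists s : seq A, forall x, kspan s x.
End LinAlg.

Definition infinite_type (T : eqType) : Prop := forall s : seq T, exists x, x \notin s.

Definition setmul (A : pzRingType) (P Q : A -> Prop) (x : A) : Prop :=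
  exists v w, [/\ P v, Q w & x = v * w].

(* spanning family of the products of two spanning families *)
Definition prodseq (A : pzRingType) (s t : seq A) : seq A :=
  [seq x * y | x <- s, y <- t].

Section Hs.
Variables (k : fieldType) (A : unitAlgType k).

(* Banach algebra over the reals: k is (isomorphic as a field to) the reals R *)
Definition banach_norm (R : realType) (absk : k -> R) (N : A -> R) : Prop :=
  (forall x, 0 <= N x) /\
  (forall x, N x = 0 -> x = 0) /\
  (forall x y, N (x + y) <= N x + N y) /\
  (forall (c : k) x, N (c *: x) = absk c * N x) /\
  (forall x y, N (x * y) <= N x * N y) /\
  (forall u : nat -> A,
     (forall e : R, 0 < e -> exists n0, forall m n, (n0 <= m)%N -> (n0 <= n)%N ->
         N (u m - u n) < e) ->
     exists l, forall e : R, 0 < e -> exists n0, forall n, (n0 <= n)%N -> N (u n - l) < e).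

Definition real_banach : Prop :=
  exists (R : realType) (iota : {rmorphism k -> R}),
    bijective iota /\ exists N : A -> R, banach_norm (fun c => `|iota c|) N.

Definition complex_banach : Prop :=
  exists (R : realType) (iota : {rmorphism k -> R[i]}),
    bijective iota /\ exists N : A -> R,
      banach_norm (fun c => let: Complex a b := iota c in Num.sqrt (a ^+ 2 + b ^+ 2)) N.

(* A is isomorphic as a k-algebra to a finite product of field extensions of k *)
Definition prod_field_ext : Prop :=
  exists (n : nat) (F : 'I_n -> fieldType)
         (emb : forall i, {rmorphism k -> F i})
         (phi : forall i, {rmorphism A -> F i}),
    [/\ forall i (c : k) (x : A), phi i (c *: x) = emb i c * phi i x,
        forall x y : A, (forall i, phi i x = phi i y) -> x = y &
        forall g : forall i, F i, exists x : A, forall i, phi i x = g i].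

Definition H_s : Prop :=
  fin_dim A \/ real_banach \/ complex_banach \/ prod_field_ext.
End Hs.

(* Main.v *)
Require Import Defs.
From HB Require Import structures.
From mathcomp Require Import all_boot all_order all_algebra.
From Stdlib Require Import Classical.
From mathcomp Require Import zify.
Set Implicit Arguments. Unset Strict Implicit. Unset Printing Implicit Defensive.
Import GRing.Theory.
Local Open Scope ring_scope.

Section LA.
Variables (k : fieldType) (A : lmodType k).
Implicit Types (s t : seq A) (x y z a : A).

Lemma span_nil x : kspan [::] x <-> x = 0.
Proof.
split; first by case=> c ->; rewrite big_ord0.
by move=> ->; exists (fun _ => 0); rewrite big_ord0.
Qed.

Definition extc n (c0 : k) (c : 'I_n -> k) (i : 'I_n.+1) : k :=
  match unlift ord0 i with Some j => c j | None => c0 end.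

Lemma span_cons a s x :
  kspan (a :: s) x <-> exists c y, kspan s y /\ x = c *: a + y.
Proof.
split.
  case=> c ->; rewrite /= big_ord_recl /=.
  exists (c ord0), (\sum_(i < size s) c (lift ord0 i) *: s`_i); split => //.
  by exists (fun i => c (lift ord0 i)).
case=> c [y [[d ->] ->]]; exists (extc c d).
rewrite /= big_ord_recl /extc unlift_none; congr (_ + _).
by apply: eq_bigr => i _; rewrite liftK.
Qed.

Lemma span0 s : kspan s 0.
Proof. by exists (fun _ => 0); rewrite big1 // => i _; rewrite scale0r. Qed.

Lemma spanD s x y : kspan s x -> kspan s y -> kspan s (x + y).
Proof.
case=> c -> [d ->]; exists (fun i => c i + d i).
by rewrite -big_split; apply: eq_bigr => i _; rewrite scalerDl.
Qed.

Lemma spanZ s c x : kspan s x -> kspan s (c *: x).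
Proof.
case=> d ->; exists (fun i => c * d i).
by rewrite scaler_sumr; apply: eq_bigr => i _; rewrite scalerA.
Qed.

Lemma spanN s x : kspan s x -> kspan s (- x).
Proof. by move=> h; rewrite -scaleN1r; apply: spanZ. Qed.

Lemma spanB s x y : kspan s x -> kspan s y -> kspan s (x - y).
Proof. by move=> hx hy; apply: spanD => //; apply: spanN. Qed.

Lemma span_mem s x : x \in s -> kspan s x.
Proof.
elim: s => [//|a s IH]; rewrite in_cons => /orP [/eqP ->|hx]; apply/span_cons.
  by exists 1, 0; split; [apply: span0| rewrite scale1r addr0].
by exists 0, x; split; [apply: IH | rewrite scale0r add0r].
Qed.

Lemma span_sub s t : (forall x, x \in s -> kspan t x) ->
  forall x, kspan s x -> kspan t x.
Proof.
elim: s => [_ x /span_nil ->|a s IH hs x /span_cons [c [y [hy ->]]]].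
  exact: span0.
apply: spanD; first by apply: spanZ; apply: hs; rewrite mem_head.
by apply: IH => // z hz; apply: hs; rewrite in_cons hz orbT.
Qed.

Lemma span_cat s t x :
  kspan (s ++ t) x <-> exists y z, [/\ kspan s y, kspan t z & x = y + z].
Proof.
elim: s x => [|a s IH] x /=.
  split; first by move=> h; exists 0, x; split => //; [apply/span_nil|rewrite add0r].
  by case=> y [z [/span_nil -> hz ->]]; rewrite add0r.
split.
  case/span_cons=> c [y [/IH [y1 [z [h1 h2 ->]]] ->]].
  exists (c *: a + y1), z; split => //; last by rewrite addrA.
  by apply/span_cons; exists c, y1.
case=> y [z [/span_cons [c [y1 [h1 ->]]] h2 ->]].
apply/span_cons; exists c, (y1 + z); split; last by rewrite addrA.
by apply/IH; exists y1, z.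
Qed.

Lemma indep_nil : lin_indep ([::] : seq A).
Proof. by move=> c _ []. Qed.

Lemma indep_cons a s : lin_indep (a :: s) <-> lin_indep s /\ ~ kspan s a.
Proof.
split.
  move=> h; split.
    move=> d hd j; have := h (extc 0 d).
    rewrite /= big_ord_recl /extc unlift_none scale0r add0r.
    have -> : \sum_(i < size s) (match unlift ord0 (lift ord0 i) with
       | Some j => d j | None => 0 end) *: s`_i = \sum_(i < size s) d i *: s`_i.
      by apply: eq_bigr => i _; rewrite liftK.
    move=> /(_ hd (lift ord0 j)); by rewrite liftK.
  case=> d hd; have := h (extc (-1) d).
  rewrite /= big_ord_recl /extc unlift_none.
  have -> : \sum_(i < size s) (match unlift ord0 (lift ord0 i) with
       | Some j => d j | None => -1 end) *: s`_i = \sum_(i < size s) d i *: s`_i.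
    by apply: eq_bigr => i _; rewrite liftK.
  rewrite -hd scaleN1r addNr => /(_ erefl ord0) /=.
  by rewrite /extc unlift_none => /eqP; rewrite oppr_eq0 oner_eq0.
case=> hs ha c; rewrite /= big_ord_recl => hc.
have c0 : c ord0 = 0.
  apply/eqP; apply/negPn/negP => hn; apply: ha.
  have -> : a = - (c ord0)^-1 *: \sum_(i < size s) c (lift ord0 i) *: s`_i.
    apply: (@scalerI _ _ (c ord0)) => //.
    rewrite scalerA mulrN mulfV // scaleN1r; apply/eqP.
    by rewrite -addr_eq0; apply/eqP.
  by apply: spanZ; exists (fun i => c (lift ord0 i)).
rewrite c0 scale0r add0r in hc.
move=> i; case: (unliftP ord0 i) => [j ->|->] //.
exact: (hs _ hc j).
Qed.


Lemma span_catl s t x : kspan s x -> kspan (s ++ t) x.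
Proof. by move=> h; apply/span_cat; exists x, 0; rewrite addr0; split=> //; apply: span0. Qed.

Lemma span_catr s t x : kspan t x -> kspan (s ++ t) x.
Proof. by move=> h; apply/span_cat; exists 0, x; rewrite add0r; split=> //; apply: span0. Qed.

Lemma span_submem s t : (forall x, x \in s -> x \in t) -> forall x, kspan s x -> kspan t x.
Proof. by move=> h; apply: span_sub => x /h; apply: span_mem. Qed.

Section Map.
Variable f : A -> A.
Hypothesis fD : forall x y, f (x + y) = f x + f y.
Hypothesis fZ : forall c x, f (c *: x) = c *: f x.

Lemma f0 : f 0 = 0.
Proof. have := fZ 0 0; rewrite !scale0r; by []. Qed.

Lemma span_map s x : kspan (map f s) x <-> exists y, kspan s y /\ x = f y.
Proof.
elim: s x => [|a s IH] x /=.
  split; first by move/span_nil ->; exists 0; rewrite f0; split=> //; apply: span0.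
  by case=> y [/span_nil -> ->]; rewrite f0; apply/span_nil.
split.
  case/span_cons=> c [y [/IH [y1 [h1 ->]] ->]]; exists (c *: a + y1).
  by rewrite fD fZ; split=> //; apply/span_cons; exists c, y1.
case=> y [/span_cons [c [y1 [h1 ->]]] ->]; rewrite fD fZ.
by apply/span_cons; exists c, (f y1); split=> //; apply/IH; exists y1.
Qed.

Lemma indep_map s : lin_indep s -> (forall y, kspan s y -> f y = 0 -> y = 0) ->
  lin_indep (map f s).
Proof.
elim: s => [|a s IH] /=; first by move=> *; apply: indep_nil.
case/indep_cons=> hs ha hk; apply/indep_cons; split.
  apply: IH => // y hy; apply: hk; apply/span_cons; exists 0, y.
  by rewrite scale0r add0r.
case/span_map=> y [hy hfy]; apply: ha.
have : a - y = 0.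
  apply: hk; first by apply/span_cons; exists 1, (- y); split; [apply: spanN|rewrite scale1r].
  by rewrite -scaleN1r fD fZ hfy scaleN1r subrr.
by move/eqP; rewrite subr_eq0 => /eqP ->.
Qed.
End Map.

Lemma indep_cat s t : lin_indep s -> lin_indep t ->
  (forall y, kspan s y -> kspan t y -> y = 0) -> lin_indep (s ++ t).
Proof.
elim: s => [|a s IH] //= /indep_cons [hs ha] ht hst; apply/indep_cons; split.
  apply: IH => // y hy1 hy2; apply: hst => //; apply/span_cons; exists 0, y.
  by rewrite scale0r add0r.
case/span_cat=> y [z [hy hz hyz]].
have z0 : z = 0.
  apply: hst => //; apply/span_cons; exists 1, (- y); split; first exact: spanN.
  by rewrite hyz scale1r addrC addKr.
by apply: ha; rewrite hyz z0 addr0.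
Qed.

Lemma indep_catE s t : lin_indep (s ++ t) ->
  [/\ lin_indep s, lin_indep t & forall y, kspan s y -> kspan t y -> y = 0].
Proof.
elim: s => [|a s IH] /=.
  by move=> ht; split => //; [apply: indep_nil| move=> y /span_nil].
case/indep_cons=> /IH [hs ht hst] ha; split => //.
  by apply/indep_cons; split => // /(@span_catl _ t).
move=> y /span_cons [c [y1 [hy1 ->]]] hy.
have c0 : c = 0.
  apply/eqP; apply/negPn/negP => hc; apply: ha.
  have -> : a = c^-1 *: ((c *: a + y1) - y1) by rewrite addrK scalerA mulVf // scale1r.
  by apply: spanZ; apply: spanB; [apply: span_catr|apply: span_catl].
move: hy; rewrite c0 scale0r add0r => hy; exact: hst.
Qed.

Lemma exch1 r Y u : kspan (Y ++ r) u -> ~ kspan Y u ->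
  exists r', (size r').+1 = size r /\
    forall x, kspan (Y ++ r) x -> kspan (u :: Y ++ r') x.
Proof.
elim: r u => [|b r IH] u.
  by rewrite cats0.
case/span_cat=> y [z [hy /span_cons [c [z0 [hz0 ->]]] ->]] hu.
have hsub : forall x, x \in Y ++ r -> x \in Y ++ b :: r.
  by move=> x; rewrite !mem_cat in_cons => /orP [->|->]; rewrite ?orbT.
case: (eqVneq c 0) => [c0|cn0].
  rewrite c0 scale0r add0r in hu *.
  have [r' [hsz hr']] : exists r', (size r').+1 = size r /\
    forall x, kspan (Y ++ r) x -> kspan ((y + z0) :: Y ++ r') x.
    apply: (IH (y + z0)) => //.
    by apply: spanD; [apply: span_catl|apply: span_catr].
  exists (b :: r'); split; first by rewrite /= hsz.
  apply: span_sub => x; rewrite mem_cat in_cons => /orP [hx|/orP [/eqP ->|hx]].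
  - apply: (span_submem _ (hr' _ _)); last by apply: span_mem; rewrite mem_cat hx.
    by move=> z1; rewrite !in_cons !mem_cat in_cons => /orP [->|/orP [->|->]]; rewrite ?orbT.
  - by apply: span_mem; rewrite in_cons mem_cat mem_head !orbT.
  - apply: (span_submem _ (hr' _ _)); last by apply: span_mem; rewrite mem_cat hx orbT.
    by move=> z1; rewrite !in_cons !mem_cat in_cons => /orP [->|/orP [->|->]]; rewrite ?orbT.
exists r; split => //.
have hsub2 : forall x, x \in Y ++ r -> x \in (y + (c *: b + z0)) :: Y ++ r.
  by move=> x hx; rewrite in_cons hx orbT.
apply: span_sub => x; rewrite mem_cat in_cons => /orP [hx|/orP [/eqP ->|hx]].
- by apply: span_mem; apply: hsub2; rewrite mem_cat hx.
- have eb : c^-1 *: ((y + (c *: b + z0)) - y - z0) = b.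
    by rewrite [y + _]addrC !addrK scalerA mulVf // scale1r.
  rewrite -[X in kspan _ X]eb.
  apply: spanZ; apply: spanB; last first.
    by apply: (span_submem _ (span_catr Y hz0)) => x1; rewrite in_cons => ->; rewrite orbT.
  apply: spanB; first by apply: span_mem; rewrite mem_head.
  by apply: (span_submem _ (span_catl r hy)) => x1; rewrite in_cons => ->; rewrite orbT.
- by apply: span_mem; apply: hsub2; rewrite mem_cat hx orbT.
Qed.

Lemma exch t s : lin_indep t -> (forall x, kspan t x -> kspan s x) ->
  exists s', (size s' + size t)%N = size s /\ forall x, kspan s x -> kspan (t ++ s') x.
Proof.
elim: t => [|u t IH] /=.
  by move=> _ _; exists s; rewrite addn0.
case/indep_cons=> ht hu hts.
have [s0 [hsz hs0]] : exists s0, (size s0 + size t)%N = size s /\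
    forall x, kspan s x -> kspan (t ++ s0) x.
  apply: IH => // x hx; apply: hts; apply/span_cons; exists 0, x.
  by rewrite scale0r add0r.
have hu2 : kspan (t ++ s0) u.
  by apply: hs0; apply: hts; apply/span_cons; exists 1, 0; split; [apply: span0|rewrite scale1r addr0].
have [r' [hr1 hr2]] := exch1 hu2 hu.
exists r'; split; first by rewrite -hsz -hr1 addSn addnS.
by move=> x /hs0 /hr2.
Qed.

Lemma steinitz t s : lin_indep t -> (forall x, kspan t x -> kspan s x) ->
  (size t <= size s)%N.
Proof. by move=> h1 h2; have [s' [<- _]] := exch h1 h2; rewrite leq_addl. Qed.

Definition subsp (P : A -> Prop) :=
  [/\ P 0, forall x y, P x -> P y -> P (x + y) & forall c x, P x -> P (c *: x)].

Lemma subsp_span s : subsp (kspan s).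
Proof. by split; [apply: span0|apply: spanD|apply: spanZ]. Qed.

Lemma basis_ex s (P : A -> Prop) : subsp P -> (forall x, P x -> kspan s x) ->
  exists b, lin_indep b /\ forall x, P x <-> kspan b x.
Proof.
elim: s P => [|a s IH] P [P0 PD PZ] hP.
  exists [::]; split; first exact: indep_nil.
  by move=> x; split; [move/hP | move/span_nil ->].
have [b [hb hbP]] : exists b, lin_indep b /\ forall x, P x /\ kspan s x <-> kspan b x.
  apply: IH => [|x []//]; split.
  - by split=> //; apply: span0.
  - by move=> x y [? ?] [? ?]; split; [apply: (PD)|apply: spanD].
  - by move=> c x [? ?]; split; [apply: (PZ)|apply: spanZ].
case: (classic (exists x, P x /\ ~ kspan s x)) => [[x [Px nx]]|nex]; last first.
  exists b; split => // x; rewrite -hbP; split; [|by case].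
  move=> Px; split => //; apply: NNPP => nx; apply: nex; by exists x.
exists (x :: b); split.
  by apply/indep_cons; split => // /hbP [].
move=> y; split => [Py|].
  have [c [y1 [hy1 ey]]] := iffLR (span_cons _ _ _) (hP _ Py).
  have [c' [x1 [hx1 ex]]] := iffLR (span_cons _ _ _) (hP _ Px).
  have c'0 : c' != 0.
    apply/negP => /eqP c0; apply: nx; by rewrite ex c0 scale0r add0r.
  have hz : kspan b (y - (c / c') *: x).
    apply/hbP; split.
      by apply: (PD) => //; rewrite -scaleN1r; apply: (PZ); apply: (PZ).
    rewrite ey ex scalerDr scalerA divfK // opprD addrACA subrr add0r.
    by apply: spanB => //; apply: spanZ.
  apply/span_cons; exists (c / c'), (y - c / c' *: x); split => //.
  by rewrite addrC subrK.
case/span_cons=> c [y1 [/hbP [hy1 _] ->]]; apply: (PD) => //; exact: (PZ).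
Qed.

Lemma extend v b : lin_indep b -> exists c, [/\ lin_indep (c ++ b),
  forall x, kspan v x -> kspan (c ++ b) x & forall x, kspan c x -> kspan v x].
Proof.
elim: v b => [|a v IH] b hb.
  exists [::]; split => // x /span_nil ->; exact: span0.
case: (classic (kspan b a)) => [ha|ha].
  have [c [h1 h2 h3]] := IH b hb; exists c; split => //.
    move=> x /span_cons [c0 [y [hy ->]]]; apply: spanD; last exact: h2.
    by apply: spanZ; apply: span_catr.
  move=> x /h3 hx; apply/span_cons; exists 0, x; by rewrite scale0r add0r.
have hb' : lin_indep (a :: b) by apply/indep_cons.
have [c [h1 h2 h3]] := IH _ hb'; exists (rcons c a); rewrite cat_rcons; split => //.
  move=> x /span_cons [c0 [y [hy ->]]]; apply: spanD; last exact: h2.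
  by apply: spanZ; apply: span_mem; rewrite mem_cat mem_head orbT.
apply: span_sub => x; rewrite mem_rcons in_cons => /orP [/eqP ->|hx].
  by apply: span_mem; rewrite mem_head.
have := h3 _ (span_mem hx); move=> hv; apply/span_cons; exists 0, x.
by rewrite scale0r add0r.
Qed.

End LA.

Section Alg.
Variables (k : fieldType) (A : unitAlgType k).
Implicit Types (s t v w : seq A) (x y z a : A).

Lemma prodseq_cons a v w : prodseq (a :: v) w = map (fun y => a * y) w ++ prodseq v w.
Proof. by []. Qed.

Lemma Lprod v w x y : kspan v x -> kspan w y -> kspan (prodseq v w) (x * y).
Proof.
elim: v x => [|a v IH] x; first by move/span_nil ->; rewrite mul0r => _; apply: span0.
case/span_cons=> c [x1 [hx1 ->]] hy; rewrite prodseq_cons mulrDl -scalerAl.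
apply/span_cat; exists (c *: (a * y)), (x1 * y); split => //; last exact: IH.
apply: spanZ; apply/(span_map (f := fun y => a * y)).
- by move=> p q; rewrite mulrDr.
- by move=> c' p; rewrite scalerAr.
by exists y.
Qed.

Lemma Lprod_sub b w' T :
  (forall x y, kspan b x -> kspan w' y -> kspan T (x * y)) ->
  forall z, kspan (prodseq b w') z -> kspan T z.
Proof.
elim: b => [|a b IH] h z.
  by move/span_nil ->; apply: span0.
rewrite prodseq_cons => /span_cat [z1 [z2 [h1 h2 ->]]]; apply: spanD.
  move: h1 => /(span_map (f := fun y => a * y)) [].
  - by move=> p q; rewrite mulrDr.
  - by move=> c' p; rewrite scalerAr.
  move=> y [hy ->]; apply: h => //; apply: span_mem; exact: mem_head.
apply: IH h2 => x y hx hy; apply: h => //.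
by apply/span_cons; exists 0, x; rewrite scale0r add0r.
Qed.

Definition concl v w :=
  exists s h, [/\ lin_indep s /\ (forall x, kspan s x -> kspan (prodseq v w) x),
    kspan s 1, lin_indep h /\ kspan h 1 /\
      (forall x y, kspan h x -> kspan h y -> kspan h (x * y)),
    (size v + size w <= size s + size h)%N &
    (forall a b, kspan h a -> kspan s b -> kspan s (a * b))].

Lemma terminal v w : lin_indep v -> lin_indep w -> kspan v 1 -> kspan w 1 ->
  (forall x y, kspan v x -> kspan w y -> kspan w (x * y)) -> concl v w.
Proof.
move=> hv hw v1 w1 hvw.
pose H := fun a => kspan w a /\ forall y, kspan w y -> kspan w (a * y).
have sH : subsp H.
  split.
  - by split; [apply: span0| move=> y _; rewrite mul0r; apply: span0].
  - move=> x y [hx1 hx2] [hy1 hy2]; split; first exact: spanD.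
    by move=> z hz; rewrite mulrDl; apply: spanD; [apply: hx2|apply: hy2].
  - move=> c x [hx1 hx2]; split; first exact: spanZ.
    by move=> z hz; rewrite -scalerAl; apply: spanZ; apply: hx2.
have [h [hh hhH]] := basis_ex sH (fun x (hx : H x) => hx.1).
exists w, h; split => //.
- split => // x hx; rewrite -[x]mul1r; exact: Lprod.
- split => //; split.
    by apply/hhH; split => // y hy; rewrite mul1r.
  move=> x y /hhH [hx1 hx2] /hhH [hy1 hy2]; apply/hhH; split.
    exact: hx2.
  by move=> z hz; rewrite -mulrA; apply: hx2; apply: hy2.
- rewrite addnC leq_add2l; apply: steinitz => // x hx; apply/hhH; split.
    by rewrite -[x]mulr1; apply: hvw.
  by move=> y hy; apply: hvw.
- by move=> a b /hhH [_ ha] hb; apply: ha.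
Qed.

Lemma full b v : lin_indep b -> (forall x, kspan b x -> kspan v x) ->
  (size v <= size b)%N -> forall x, kspan v x -> kspan b x.
Proof.
move=> hb hbv hsz x hx; apply: NNPP => nx.
have : (size (x :: b) <= size v)%N.
  apply: steinitz; first by apply/indep_cons.
  move=> y /span_cons [c [y1 [hy1 ->]]]; apply: spanD; [exact: spanZ|exact: hbv].
by rewrite /= => h; have := leq_trans h hsz; rewrite ltnn.
Qed.


Lemma step v w : lin_indep v -> lin_indep w -> kspan v 1 -> kspan w 1 ->
  (forall x y, kspan v x -> kspan v y -> x * y = y * x) ->
  ~ (forall x y, kspan v x -> kspan w y -> kspan w (x * y)) ->
  exists b w', [/\ (size b < size v)%N, lin_indep b /\ lin_indep w',
    kspan b 1 /\ kspan w' 1, (forall x, kspan b x -> kspan v x) /\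
      (size v + size w <= size b + size w')%N &
    forall z, kspan (prodseq b w') z -> kspan (prodseq v w) z].
Proof.
move=> hv hw v1 w1 hcom hn.
have [x0 [X [hx0 [hX hnX]]]] : exists x y, kspan v x /\ kspan w y /\ ~ kspan w (x * y).
  apply: NNPP => hne; apply: hn => x y hx hy; apply: NNPP => hxy; apply: hne.
  by exists x, y.
pose P := fun z => kspan v z /\ kspan w (z * X).
have sP : subsp P.
  split.
  - by split; [apply: span0|rewrite mul0r; apply: span0].
  - by move=> x y [? ?] [? ?]; split; [apply: spanD|rewrite mulrDl; apply: spanD].
  - by move=> c x [? ?]; split; [apply: spanZ|rewrite -scalerAl; apply: spanZ].
have [b [hb hbP]] := basis_ex sP (fun x (hx : P x) => hx.1).
have [c [h1 h2 h3]] := extend v hb.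
have [hc _ hdisj] := indep_catE h1.
have hsv : (size v <= size c + size b)%N by rewrite -size_cat; apply: steinitz.
pose Q := fun z => exists p q, [/\ kspan w p, kspan v q & z = p + q * X].
have fD : forall p q : A, (p + q) * X = p * X + q * X by move=> p q; rewrite mulrDl.
have fZ : forall (c : k) (p : A), (c *: p) * X = c *: (p * X) by move=> c0 p; rewrite scalerAl.
have sQ : subsp Q.
  split.
  - by exists 0, 0; split; [apply: span0|apply: span0|rewrite mul0r addr0].
  - move=> x y [p1 [q1 [? ? ->]]] [p2 [q2 [? ? ->]]].
    exists (p1 + p2), (q1 + q2); split; [exact: spanD|exact: spanD|].
    by rewrite mulrDl addrACA.
  - move=> c0 x [p1 [q1 [? ? ->]]]; exists (c0 *: p1), (c0 *: q1).
    by split; [exact: spanZ|exact: spanZ|rewrite scalerDr scalerAl].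
have Qsub : forall z, Q z -> kspan (w ++ map (fun q => q * X) v) z.
  move=> z [p [q [hp hq ->]]]; apply/span_cat; exists p, (q * X); split => //.
  by apply/(span_map fD fZ); exists q.
have [w' [hw' hw'Q]] := basis_ex sQ Qsub.
have hPc : forall y, kspan c y -> kspan w (y * X) -> y = 0.
  move=> y hy hyX; apply: hdisj => //; apply/hbP; split => //; exact: h3.
have hind : lin_indep (w ++ map (fun q => q * X) c).
  apply: indep_cat => //.
    apply: (indep_map fD fZ) => // y hy hy0; apply: hPc => //.
    by rewrite hy0; apply: span0.
  move=> z hz /(span_map fD fZ) [y [hy ez]].
  by rewrite ez in hz *; rewrite (hPc y hy hz) mul0r.
have hsw : (size w + size c <= size w')%N.
  have := steinitz (s := w') hind; rewrite size_cat size_map; apply.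
  move=> z /span_cat [p [z2 [hp /(span_map fD fZ) [q [hq ->]] ->]]].
  by apply/hw'Q; exists p, q; split => //; apply: h3.
exists b, w'; split.
- rewrite ltnNge; apply/negP => hle; apply: hnX.
  have : P x0 by apply/hbP; apply: full hle _ hx0 => // x /hbP [].
  by case.
- by [].
- split; first by apply/hbP; split => //; rewrite mul1r.
  by apply/hw'Q; exists 1, 0; split => //; [apply: span0|rewrite mul0r addr0].
- split; first by move=> x /hbP [].
  apply: (leq_trans (leq_add hsv (leqnn (size w)))).
  by rewrite [(size c + _)%N]addnC -addnA leq_add2l addnC.
apply: Lprod_sub => x y /hbP [hx hxX] /hw'Q [p [q [hp hq ->]]].
rewrite mulrDr; apply: spanD; first exact: Lprod.
by rewrite mulrA (hcom x q) // -mulrA; apply: Lprod.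
Qed.

Lemma inner n v w : (size v <= n)%N -> lin_indep v -> lin_indep w ->
  kspan v 1 -> kspan w 1 ->
  (forall x y, kspan v x -> kspan v y -> x * y = y * x) -> concl v w.
Proof.
elim: n v w => [|n IH] v w hsz hv hw v1 w1 hcom.
  move: hsz; rewrite leqn0 => /nilP hnil; move: v1; rewrite hnil => /span_nil /eqP.
  by rewrite oner_eq0.
case: (classic (forall x y, kspan v x -> kspan w y -> kspan w (x * y))) => hc.
  exact: terminal.
have [b [w' [hbs [hb hw'] [b1 w'1] [hbv hsz2] hpr]]] := step hv hw v1 w1 hcom hc.
have [s [h [[hs hsp] s1 hh hsz3 hhs]]] : concl b w'.
  apply: IH => //; first by rewrite -ltnS; exact: leq_trans hbs hsz.
  by move=> x y /hbv hx /hbv hy; apply: hcom.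
exists s, h; split => //.
- by split => // x /hsp; apply: hpr.
- exact: leq_trans hsz2 hsz3.
Qed.


Lemma Lprod_subf (f : A -> A) b w' T :
  (forall x y, f (x + y) = f x + f y) -> (forall (c : k) x, f (c *: x) = c *: f x) ->
  (forall x y, kspan b x -> kspan w' y -> kspan T (f (x * y))) ->
  forall z, kspan (prodseq b w') z -> kspan T (f z).
Proof.
move=> fD fZ; elim: b => [|a b IH] h z.
  by move/span_nil ->; rewrite (f0 fZ); apply: span0.
rewrite prodseq_cons => /span_cat [z1 [z2 [h1 h2 ->]]]; rewrite fD; apply: spanD.
  move: h1 => /(span_map (f := fun y => a * y)) [].
  - by move=> p q; rewrite mulrDr.
  - by move=> c' p; rewrite scalerAr.
  move=> y [hy ->]; apply: h => //; apply: span_mem; exact: mem_head.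
apply: IH h2 => x y hx hy; apply: h => //.
by apply/span_cons; exists 0, x; rewrite scale0r add0r.
Qed.

Lemma unit_cancel u u' z : u \is a GRing.unit -> u' \is a GRing.unit ->
  u * z * u' = 0 -> z = 0.
Proof.
move=> hu hu' h.
have -> : z = u^-1 * (u * z * u') * u'^-1.
  by rewrite !mulrA mulVr // mul1r -mulrA mulrV // mulr1.
by rewrite h mulr0 mul0r.
Qed.

End Alg.

Unset Implicit Arguments.
Set Strict Implicit.

Theorem corollary4p9 (k : fieldType) (A : unitAlgType k)
    (kinf : infinite_type k) (hs : H_s A)
    (v w : seq A) (v_indep : lin_indep v) (w_indep : lin_indep w) :
    (forall x y, kspan v x -> kspan v y -> x * y = y * x) ->
    (exists x, kspan v x /\ x \is a GRing.unit) ->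
    (exists x, kspan w x /\ x \is a GRing.unit) ->
    exists (s h : seq A),
      [/\ lin_indep s /\ (forall x, kspan s x -> kspan (prodseq v w) x),
          (exists x, kspan s x /\ x \is a GRing.unit),
          lin_indep h /\ kspan h 1 /\
            (forall x y, kspan h x -> kspan h y -> kspan h (x * y)),
          (exists d, has_dim (kspan (prodseq v w)) d /\
             (size s <= d)%N /\
             (size v + size w <= size s + size h)%N) &
          forall x, setmul (kspan h) (kspan s) x <-> kspan s x].
Proof.
move=> hcom [u [hu uU]] [u' [hu' u'U]].
have lD : forall c (p q : A), c * (p + q) = c * p + c * q by move=> *; rewrite mulrDr.
have lZ : forall c (a : k) (p : A), c * (a *: p) = a *: (c * p) by move=> *; rewrite scalerAr.
have rD : forall c (p q : A), (p + q) * c = p * c + q * c by move=> *; rewrite mulrDl.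
have rZ : forall c (a : k) (p : A), (a *: p) * c = a *: (p * c) by move=> *; rewrite scalerAl.
have cD : forall c c' (p q : A), c * (p + q) * c' = c * p * c' + c * q * c' by move=> *; rewrite mulrDr mulrDl.
have cZ : forall c c' (a : k) (p : A), c * (a *: p) * c' = a *: (c * p * c').
  by move=> *; rewrite -scalerAr -scalerAl.
pose v' := map (fun z => u^-1 * z) v.
pose w' := map (fun z => z * u'^-1) w.
have cu : forall a, kspan v a -> a * u^-1 = u^-1 * a.
  move=> a ha; have := commrV (hcom _ _ ha hu); by [].
have [s0 [h0 [[hs0 hsp0] s01 [hh0 [h01 hhm]] hsz hHS]]] : concl v' w'.
  apply: (inner (n := size v')) => //.
  - apply: (indep_map (lD _) (lZ _)) => // y _ hy.
    by apply: (unit_cancel (u := u^-1) (u' := 1)); rewrite ?unitrV ?unitr1 // mulr1.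
  - apply: (indep_map (rD _) (rZ _)) => // y _ hy.
    by apply: (unit_cancel (u := 1) (u' := u'^-1)); rewrite ?unitrV ?unitr1 // mul1r.
  - by apply/(span_map (lD _) (lZ _)); exists u; rewrite mulVr.
  - by apply/(span_map (rD _) (rZ _)); exists u'; rewrite mulrV.
  - move=> x y /(span_map (lD _) (lZ _)) [a [ha ->]] /(span_map (lD _) (lZ _)) [b [hb ->]].
    have e1 : forall a b, kspan v a -> u^-1 * a * (u^-1 * b) = u^-1 * u^-1 * (a * b).
      move=> a1 b1 ha1.
      by rewrite mulrA -(mulrA (u^-1) a1 u^-1) (cu a1 ha1) mulrA -(mulrA (u^-1 * u^-1) a1 b1).
    by rewrite (e1 a b ha) (e1 b a hb) (hcom a b).
pose f := fun z => u * z * u'.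
pose g := fun z => u * z * u^-1.
have [bb [hbb hbbP]] := basis_ex (subsp_span (prodseq v w)) (fun x (hx : kspan _ x) => hx).
have hsub : forall x, kspan (map f s0) x -> kspan (prodseq v w) x.
  move=> x /(span_map (cD _ _) (cZ _ _)) [z [hz ->]].
  apply: (Lprod_subf (cD _ _) (cZ _ _) _ (hsp0 _ hz)).
  move=> x1 y1 /(span_map (lD _) (lZ _)) [a [ha ->]] /(span_map (rD _) (rZ _)) [b [hb ->]].
  rewrite /f !mulrA mulrV // mul1r -!mulrA mulVr // mulr1.
  exact: Lprod.
have hsind : lin_indep (map f s0).
  apply: (indep_map (cD _ _) (cZ _ _)) => // y _ hy.
  exact: (unit_cancel uU u'U).
exists (map f s0), (map g h0); split.
- by split.
- exists (f 1); split; first by apply/(span_map (cD _ _) (cZ _ _)); exists 1.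
  by rewrite /f mulr1 unitrMl.
- split; first apply: (indep_map (cD _ _) (cZ _ _)) => // y _ hy.
    by apply: (unit_cancel uU _ hy); rewrite unitrV.
  split; first by apply/(span_map (cD _ _) (cZ _ _)); exists 1; rewrite /g mulr1 mulrV.
  move=> x y /(span_map (cD _ _) (cZ _ _)) [a [ha ->]] /(span_map (cD _ _) (cZ _ _)) [b [hb ->]].
  apply/(span_map (cD _ _) (cZ _ _)); exists (a * b); split; first exact: hhm.
  by rewrite /g !mulrA -(mulrA _ u^-1) mulVr // mulr1 -!mulrA.
- exists (size bb); split; first by exists bb.
  split; first by apply: (steinitz (s := bb)) => // x hx; apply/hbbP; apply: hsub.
  by rewrite !size_map in hsz *.
move=> x; split.
  case=> a [b [/(span_map (cD _ _) (cZ _ _)) [a0 [ha0 ->]] /(span_map (cD _ _) (cZ _ _)) [b0 [hb0 ->]] ->]].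
  apply/(span_map (cD _ _) (cZ _ _)); exists (a0 * b0); split; first exact: hHS.
  by rewrite /f /g !mulrA -(mulrA _ u^-1) mulVr // mulr1 -!mulrA.
move=> hx; exists 1, x; split => //; last by rewrite mul1r.
by apply/(span_map (cD _ _) (cZ _ _)); exists 1; rewrite mulr1 mulrV.
Qed.
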